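(* If $g\in\mathcal{G}$ is $\mathbb{S}$-nearly periodic, then for every $\delta>0$ there exists an $\mathbb{S}$-normal function $h\in\mathcal{G}$ that is not 1-pass tractable and satisfies $\Theta(g,h)\le\delta$.
   Context: Streams: a stream of length $m$ with domain $[n]$ is a list $D=\langle (i_1,\delta_1),\dots,(i_m,\delta_m)\rangle$ with $i_j\in[n]$, $\delta_j\in\mathbb{Z}$; its frequency vector $V(D)=v\in\mathbb{Z}^n$ has $v_i=\sum_{j:i_j=i}\delta_j$. (Turnstile model) there is $M\in\mathbb{N}$ such that the frequency vector of $D$ and of every prefix of $D$ lies in $\{-M,\dots,M\}^n$; throughout $M$ is polynomial in $n$. $\mathcal{D}(n,m)$ is the set of such streams with domain $[n]$ and length at most $m$. A $p$-pass algorithm reads the stream $p$ times in order and may use randomness. For $g:\mathbb{Z}_{\ge0}\to\mathbb{R}$ and $v\in\mathbb{Z}^n$ let $g(v)=\sum_{i=1}^n g(|v_i|)$. The problem $(g,\epsilon)$-SUM is to output $\hat G$ with $P\big((1-\epsilon)g(V(D))\le \hat G\le (1+\epsilon)g(V(D))\big)\ge 2/3$. A function $f:\mathbb{R}_{\ge0}\to\mathbb{R}_{\ge0}$ is sub-polynomial if for every $\alpha>0$, $\lim_{x\to\infty}x^\alpha f(x)=\infty$ and $\lim_{x\to\infty}x^{-\alpha}f(x)=0$. $g$ is $p$-pass tractable if for every sub-polynomial $h$ and every $\epsilon\ge 1/h(nM)$ there exist a sub-polynomial $h^*$ and a $p$-pass algorithm (with oracle access to $g$) that solves $(g,\epsilon)$-SUM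 for all streams in $\mathcal{D}(n,m)$ and all $n,M\ge1$ using at most $h^*(nM)$ bits of space in the worst case. $\mathcal{G}=\{g:\mathbb{Z}_{\ge0}\to\mathbb{R}: g(0)=0,\ g(1)=1,\ g(x)>0\ \forall x>0\}$. For $g,h\in\mathcal{G}$, $\Theta(g,h)=\sup_{x\in\mathbb{N}}|\log g(x)-\log h(x)|$. For a set $\mathcal{S}$ of functions, $g$ is $\mathcal{S}$-nearly periodic if (1) there is $\alpha>0$ such that for every $N>0$ there exist $x,y\in\mathbb{N}$, $x<y$, $y\ge N$ with $g(y)\le g(x)/y^\alpha$ (such $y$ is called an $\alpha$-period of $g$); and (2) for every $\alpha>0$ and every $h\in\mathcal{S}$ there is $N_1>0$ such that for all $\alpha$-periods $y\ge N_1$ and all $x<y$ with $g(y)y^\alpha\le g(x)$, $|g(x+y)-g(x)|\le \min\{g(x),g(x+y)\}h(y)$. $g$ is $\mathcal{S}$-normal if it is not $\mathcal{S}$-nearly periodic. $\mathbb{S}$ denotes the set of non-increasing sub-polynomial functions on $\mathbb{Z}_{\ge0}$. *)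

(* Defs.v *)
From Stdlib Require Import Reals.
From mathcomp Require Import all_boot all_algebra.
Unset Printing Implicit Defensive.

Local Open Scope R_scope.

Definition inG (g : nat -> R) : Prop :=
  g 0%N = 0 /\ g 1%N = 1 /\ forall x : nat, (0 < x)%N -> 0 < g x.

(* Theta(g,h) = sup_{x in N} |log g x - log h x| <= delta,
   i.e. every term of the supremum is <= delta (N = positive integers,
   log g 0 being undefined). *)
Definition Theta_le (g h : nat -> R) (delta : R) : Prop :=
  forall x : nat, (0 < x)%N -> Rabs (ln (g x) - ln (h x)) <= delta.

Definition subpolyR (f : R -> R) : Prop :=
  (forall x, 0 <= x -> 0 <= f x) /\
  forall alpha, 0 < alpha ->
    (forall B, exists X, forall x, X <= x -> 0 < x -> B <= Rpower x alpha * f x) /\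
    (forall eps, 0 < eps -> exists X, forall x, X <= x -> 0 < x ->
        Rabs (Rpower x (- alpha) * f x) < eps).

Definition subpolyN (f : nat -> R) : Prop :=
  (forall x, 0 <= f x) /\
  forall alpha, 0 < alpha ->
    (forall B, exists X : nat, forall x : nat, (X <= x)%N -> (0 < x)%N ->
        B <= Rpower (INR x) alpha * f x) /\
    (forall eps, 0 < eps -> exists X : nat, forall x : nat, (X <= x)%N -> (0 < x)%N ->
        Rabs (Rpower (INR x) (- alpha) * f x) < eps).

Definition bbS (f : nat -> R) : Prop :=
  subpolyN f /\ forall x y : nat, (x <= y)%N -> f y <= f x.

Definition is_period (g : nat -> R) (alpha : R) (y : nat) : Prop :=
  exists x : nat, (x < y)%N /\ g y <= g x / Rpower (INR y) alpha.

Definition nearly_periodic (S : (nat -> R) -> Prop) (g : nat -> R) : Prop :=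
  (exists alpha, 0 < alpha /\
     forall N, 0 < N -> exists x y : nat, (x < y)%N /\ N <= INR y /\
        g y <= g x / Rpower (INR y) alpha) /\
  (forall alpha, 0 < alpha -> forall h, S h ->
     exists N1, 0 < N1 /\
       forall y : nat, is_period g alpha y -> N1 <= INR y ->
       forall x : nat, (x < y)%N -> g y * Rpower (INR y) alpha <= g x ->
         Rabs (g (x + y)%N - g x) <= Rmin (g x) (g (x + y)%N) * h y).

Definition normal (S : (nat -> R) -> Prop) (g : nat -> R) : Prop :=
  ~ nearly_periodic S g.

Definition update (n : nat) := ('I_n * int)%type.

Definition freq {n : nat} (D : seq (update n)) (i : 'I_n) : int :=
  (\sum_(u <- D | u.1 == i) u.2)%R.

Definition turnstile (M : nat) {n : nat} (D : seq (update n)) : Prop :=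
  forall k : nat, (k <= size D)%N -> forall i : 'I_n,
    (absz (freq (take k D) i) <= M)%N.

Definition gsum {n : nat} (g : nat -> R) (v : 'I_n -> int) : R :=
  \big[Rplus/0]_(i < n) g (absz (v i)).

(* Randomness: a public random seed
   drawn from an arbitrary finite distribution (not charged to space), plus
   probabilistic transitions.  The transition may depend on the pass index.
   (This model is at least as strong as the usual ones.) *)
Record algorithm (n s : nat) := Algorithm {
  seed : finType;
  seed_w : seed -> R;
  init : seed -> 'I_(2 ^ s) -> R;
  trans : seed -> nat -> 'I_(2 ^ s) -> update n -> 'I_(2 ^ s) -> R;
  output : seed -> 'I_(2 ^ s) -> R
}.
Arguments seed {n s} a : rename.
Arguments seed_w {n s} a _ : rename.
Arguments init {n s} a _ _ : rename.
Arguments trans {n s} a _ _ _ _ _ : rename.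
Arguments output {n s} a _ _ : rename.

Definition valid_alg {n s : nat} (A : algorithm n s) : Prop :=
  (forall w, 0 <= seed_w A w) /\ \big[Rplus/0]_(w : seed A) seed_w A w = 1 /\
  forall w,
    (forall x, 0 <= init A w x) /\ \big[Rplus/0]_(x : 'I_(2 ^ s)) init A w x = 1 /\
    forall k x u, (forall y, 0 <= trans A w k x u y) /\
                  \big[Rplus/0]_(y : 'I_(2 ^ s)) trans A w k x u y = 1.

Definition run_pass {n s : nat} (A : algorithm n s) (w : seed A) (k : nat)
    (d : 'I_(2 ^ s) -> R) (D : seq (update n)) : 'I_(2 ^ s) -> R :=
  foldl (fun d u => fun y => \big[Rplus/0]_(x : 'I_(2 ^ s)) (d x * trans A w k x u y))
        d D.

Definition run {n s : nat} (A : algorithm n s) (w : seed A) (p : nat)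
    (D : seq (update n)) : 'I_(2 ^ s) -> R :=
  foldl (fun d k => run_pass A w k d D) (init A w) (iota 0 p).

Definition prob_out_in {n s : nat} (A : algorithm n s) (p : nat)
    (D : seq (update n)) (lo hi : R) : R :=
  \big[Rplus/0]_(w : seed A) (seed_w A w *
     \big[Rplus/0]_(x : 'I_(2 ^ s))
        (run A w p D x *
         (if Rle_dec lo (output A w x) then
            if Rle_dec (output A w x) hi then 1 else 0 else 0))).

Definition solves_SUM {n s : nat} (A : algorithm n s) (p : nat)
    (g : nat -> R) (eps : R) (M : nat) : Prop :=
  forall D : seq (update n), turnstile M D ->
    2 / 3 <= prob_out_in A p D ((1 - eps) * gsum g (freq D))
                               ((1 + eps) * gsum g (freq D)).

Definition tractable (p : nat) (g : nat -> R) : Prop :=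
  forall h : R -> R, subpolyR h ->
  forall eps : nat -> nat -> R,
    (forall n M : nat, (1 <= n)%N -> (1 <= M)%N -> eps n M >= / h (INR (n * M))) ->
  exists hstar : R -> R, subpolyR hstar /\
    forall n M : nat, (1 <= n)%N -> (1 <= M)%N ->
      exists s : nat, INR s <= hstar (INR (n * M)) /\
      exists A : algorithm n s, valid_alg A /\ solves_SUM A p g (eps n M) M.

(* Main.v *)
Require Import Defs.
From HB Require Import structures.
From Stdlib Require Import Reals Lra Lia ZArith ClassicalEpsilon Classical.
From mathcomp Require Import all_boot all_order all_algebra zify.


Local Open Scope R_scope.

Lemma Rplus_assoc' : associative Rplus.
Proof. by move=> x y z; rewrite Rplus_assoc. Qed.
Lemma Rmult_assoc' : associative Rmult.
Proof. by move=> x y z; rewrite Rmult_assoc. Qed.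

HB.instance Definition _ := Monoid.isComLaw.Build R 0 Rplus Rplus_assoc' Rplus_comm Rplus_0_l.
HB.instance Definition _ := Monoid.isComLaw.Build R 1 Rmult Rmult_assoc' Rmult_comm Rmult_1_l.
HB.instance Definition _ := Monoid.isMulLaw.Build R 0 Rmult Rmult_0_l Rmult_0_r.
HB.instance Definition _ := Monoid.isAddLaw.Build R Rmult Rplus Rmult_plus_distr_r Rmult_plus_distr_l.

Section BigR.
Variable I : Type.

Lemma sumR_le (r : seq I) (P : pred I) (F G : I -> R) :
  (forall i, P i -> F i <= G i) ->
  \big[Rplus/0]_(i <- r | P i) F i <= \big[Rplus/0]_(i <- r | P i) G i.
Proof.
move=> H; elim/big_ind2: _ => //; first lra.
by move=> *; apply: Rplus_le_compat.
Qed.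

Lemma sumR_ge0 (r : seq I) (P : pred I) (F : I -> R) :
  (forall i, P i -> 0 <= F i) -> 0 <= \big[Rplus/0]_(i <- r | P i) F i.
Proof.
move=> H; elim/big_ind: _ => //; first lra.
by move=> *; apply: Rplus_le_le_0_compat.
Qed.

Lemma prodR_le (r : seq I) (P : pred I) (F G : I -> R) :
  (forall i, P i -> 0 <= F i <= G i) ->
  0 <= \big[Rmult/1]_(i <- r | P i) F i <= \big[Rmult/1]_(i <- r | P i) G i.
Proof.
move=> H; elim/big_ind2: _ => //; first lra.
move=> x1 x2 y1 y2 [h1 h2] [h3 h4]; split; first nra.
by apply: Rmult_le_compat.
Qed.

Lemma exp_sum (r : seq I) (P : pred I) (F : I -> R) :
  exp (\big[Rplus/0]_(i <- r | P i) F i) = \big[Rmult/1]_(i <- r | P i) exp (F i).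
Proof.
elim/big_rec2: _ => //; first by rewrite exp_0.
by move=> i y1 y2 _ <-; rewrite exp_plus.
Qed.

Lemma sumR_distrl (r : seq I) (P : pred I) (a : R) (F : I -> R) :
  a * \big[Rplus/0]_(i <- r | P i) F i = \big[Rplus/0]_(i <- r | P i) (a * F i).
Proof. by rewrite big_distrr. Qed.

Lemma sumR_plus (r : seq I) (P : pred I) (F G : I -> R) :
  \big[Rplus/0]_(i <- r | P i) (F i + G i) =
  \big[Rplus/0]_(i <- r | P i) F i + \big[Rplus/0]_(i <- r | P i) G i.
Proof. by rewrite big_split. Qed.

End BigR.

Lemma sumR_const (T : finType) (c : R) :
  \big[Rplus/0]_(i : T) c = INR #|T| * c.
Proof.
rewrite big_const; elim: #|T| => [|n IH]; first by rewrite /=; lra.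
rewrite iterS IH S_INR; lra.
Qed.

Lemma prodR_const (m : nat) (c : R) :
  \big[Rmult/1]_(i < m) c = c ^ m.
Proof.
rewrite big_const card_ord; elim: m => [|n IH] //=.
by rewrite IH.
Qed.

Lemma exists_max (T : finType) (x0 : T) (F : T -> R) :
  exists x, forall y, F y <= F x.
Proof.
have: forall s : seq T, exists x, forall y, y \in s -> F y <= F x.
  elim=> [|a s [x Hx]]; first by exists x0.
  case: (Rle_lt_dec (F a) (F x)) => h.
    exists x => y; rewrite inE => /orP [/eqP ->|/Hx] //.
  exists a => y; rewrite inE => /orP [/eqP ->|/Hx]; lra.
move=> /(_ (enum T)) [x Hx]; exists x => y; apply: Hx; by rewrite mem_enum.
Qed.

Lemma avg_le_max (T : finType) (d F : T -> R) (x : T) :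
  (forall y, 0 <= d y) -> \big[Rplus/0]_y d y = 1 -> (forall y, F y <= F x) ->
  \big[Rplus/0]_y (d y * F y) <= F x.
Proof.
move=> d0 d1 Hx.
apply: Rle_trans (_ : \big[Rplus/0]_y (d y * F x) <= _).
  apply: sumR_le => y _; apply: Rmult_le_compat_l => //.
rewrite -big_distrl /= d1; lra.
Qed.

Module MP2.

Local Open Scope R_scope.

Lemma ln_le' x y : 0 < x -> x <= y -> ln x <= ln y.
Proof.
move=> hx [h|->]; last lra.
by apply: Rlt_le; apply: ln_increasing.
Qed.

Lemma expb_le (c : R) : 0 <= c <= 1 -> exp (c/6) <= 1 + c/5.
Proof.
move=> hc.
have h := exp_ineq1_le (-(c/6)).
have e : exp (c/6) * exp (-(c/6)) = 1.
  by rewrite -exp_plus Rplus_opp_r exp_0.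
have p := exp_pos (c/6).
have k : exp (c/6) * (1 - c/6) <= 1 by nra.
have k2 : 1 <= (1 + c/5) * (1 - c/6) by nra.
nra.
Qed.

Lemma exp_INR_mul (m : nat) (x : R) : exp (INR m * x) = exp x ^ m.
Proof.
rewrite -Rpower_pow; last exact: exp_pos.
by rewrite /Rpower ln_exp.
Qed.

Lemma ln2_lt1 : ln 2 < 1.
Proof.
rewrite -[X in _ < X](ln_exp 1); apply: ln_increasing; first lra.
have := exp_ineq1 1; lra.
Qed.

Lemma ln_1p_le x : 0 < x -> ln (1 + x) <= x.
Proof.
move=> hx; rewrite -{2}(ln_exp x); apply: ln_le'; first lra.
exact: exp_ineq1_le.
Qed.

Lemma exp_le' x y : x <= y -> exp x <= exp y.
Proof. move=> [h|->]; last lra. by apply: Rlt_le; apply: exp_increasing. Qed.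

Lemma prodR_mono (I : Type) (r : seq I) (P : pred I) (F G : I -> R) :
  (forall i, P i -> 0 <= F i <= G i) ->
  \big[Rmult/1]_(i <- r | P i) F i <= \big[Rmult/1]_(i <- r | P i) G i.
Proof. by move=> H; have := prodR_le I r P F G H; case. Qed.

Lemma prodR_ge0 (I : Type) (r : seq I) (P : pred I) (F : I -> R) :
  (forall i, P i -> 0 <= F i) -> 0 <= \big[Rmult/1]_(i <- r | P i) F i.
Proof.
move=> H; have := prodR_le I r P F F; case => //.
by move=> i Pi; split; [apply: H | lra].
Qed.

End MP2.
Import MP2.

Module MP3.

Local Open Scope R_scope.

Section LB.
Variables (m s : nat) (W : finType) (p : W -> R)
  (d : W -> {ffun 'I_m -> bool} -> 'I_(2 ^ s) -> R)
  (C : W -> 'I_(2 ^ s) -> 'I_m -> bool -> R).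
Hypotheses (p0 : forall w, 0 <= p w) (p1 : \big[Rplus/0]_w p w = 1)
  (d0 : forall w a x, 0 <= d w a x) (d1 : forall w a, \big[Rplus/0]_x d w a x = 1)
  (C0 : forall w x i b, 0 <= C w x i b)
  (C1 : forall w x i, C w x i true + C w x i false <= 1)
  (H : forall a i, 2/3 <= \big[Rplus/0]_w (p w * \big[Rplus/0]_x (d w a x * C w x i (a i)))).

Let A := {ffun 'I_m -> bool}.
Let Phi w := \big[Rplus/0]_(a : A) \big[Rplus/0]_x (d w a x * \big[Rplus/0]_(i < m) C w x i (a i)).
Let mu := INR m * (2/3).

Lemma INR_expn2 (k : nat) : INR (2 ^ k) = 2 ^ k.
Proof.
elim: k => [|k IH]; first by [].
rewrite expnS mult_INR IH /=; lra.
Qed.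

Lemma cardA : INR #|A| = 2 ^ m.
Proof. by rewrite card_ffun card_bool card_ord INR_expn2. Qed.

Lemma claim1 : INR #|A| * mu <= \big[Rplus/0]_w (p w * Phi w).
Proof.
have -> : \big[Rplus/0]_w (p w * Phi w) =
   \big[Rplus/0]_(a : A) \big[Rplus/0]_(i < m) \big[Rplus/0]_w (p w * \big[Rplus/0]_x (d w a x * C w x i (a i))).
  transitivity (\big[Rplus/0]_w \big[Rplus/0]_(a : A) \big[Rplus/0]_(i < m)
      (p w * \big[Rplus/0]_x (d w a x * C w x i (a i)))); last first.
    rewrite exchange_big /=; apply: eq_bigr => a _.
    by rewrite exchange_big.
  rewrite /Phi; apply: eq_bigr => w _.
  rewrite big_distrr /=; apply: eq_bigr => a _.
  rewrite -big_distrr /=; congr (_ * _).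
  transitivity (\big[Rplus/0]_x \big[Rplus/0]_(i < m) (d w a x * C w x i (a i))).
    by apply: eq_bigr => x _; rewrite big_distrr.
  by rewrite exchange_big.
rewrite /mu -sumR_const.
apply: sumR_le => a _.
apply: Rle_trans (_ : \big[Rplus/0]_(i < m) (2/3) <= _).
  by rewrite sumR_const card_ord; lra.
by apply: sumR_le => i _; apply: H.
Qed.

Lemma claim2 : exists w0, INR #|A| * mu <= Phi w0.
Proof.
have [w1 _] : exists w1 : W, True.
  case: (pickP (fun _ : W => true)) => [w1 _|h]; first by exists w1.
  move: p1; rewrite big_pred0 // => e; lra.
have [w0 hw0] := exists_max _ w1 Phi.
exists w0; apply: Rle_trans claim1 _.
exact: avg_le_max.
Qed.

Let x0 : 'I_(2 ^ s) := Ordinal (expn_gt0 2 s).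

Lemma keybound w0 : INR #|A| * mu <= Phi w0 ->
  2 ^ m * exp (mu / 6) <= 2 ^ s * (11/5) ^ m.
Proof.
move=> hPhi.
pose F x (a : A) := \big[Rplus/0]_(i < m) C w0 x i (a i).
pose phi (a : A) := \big[Rplus/0]_x (d w0 a x * F x a).
have Fb : forall x (a : A) i, 0 <= C w0 x i (a i) <= 1.
  move=> x a i; have := C1 w0 x i; have := C0 w0 x i true; have := C0 w0 x i false.
  case: (a i) => /=; split; try lra; apply: C0.
have s5 : INR #|A| * exp (mu / 6) <= \big[Rplus/0]_(a : A) exp (phi a / 6).
  apply: Rle_trans (_ : \big[Rplus/0]_(a : A)
      (exp (mu/6) * (1 - mu/6) + exp (mu/6) / 6 * phi a) <= _).
    rewrite sumR_plus sumR_const -big_distrr /=.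
    have : \big[Rplus/0]_(a : A) phi a = Phi w0 by [].
    move=> ->; have ep := exp_pos (mu/6).
    have := Rmult_le_compat_l (exp (mu/6) / 6) _ _ (ltac:(lra)) hPhi; change (INR #|{ffun 'I_m -> bool}|) with (INR #|A|); lra.
  apply: sumR_le => a _.
  have e : exp (phi a / 6) = exp (mu/6) * exp ((phi a - mu)/6).
    by rewrite -exp_plus; congr exp; field.
  rewrite e; have := exp_ineq1_le ((phi a - mu)/6); have := exp_pos (mu/6); nra.
have s6 : forall a : A, exp (phi a / 6) <=
    \big[Rplus/0]_x \big[Rmult/1]_(i < m) (1 + C w0 x i (a i) / 5).
  move=> a.
  have [xa hxa] := exists_max _ x0 (fun x => F x a).
  have h1 : phi a <= F xa a by apply: avg_le_max.
  apply: Rle_trans (_ : exp (F xa a / 6) <= _); first by apply: exp_le'; lra.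
  apply: Rle_trans (_ : \big[Rmult/1]_(i < m) (1 + C w0 xa i (a i) / 5) <= _).
    have -> : F xa a / 6 = \big[Rplus/0]_(i < m) (C w0 xa i (a i) / 6).
      by rewrite /F /Rdiv big_distrl.
    rewrite exp_sum; apply: prodR_mono => i _.
    split; first by apply: Rlt_le; apply: exp_pos.
    by apply: expb_le; apply: Fb.
  rewrite (bigD1 xa) //=.
  rewrite -[X in X <= _]Rplus_0_r; apply: Rplus_le_compat_l.
  apply: sumR_ge0 => x _; apply: prodR_ge0 => i _.
  by have := Fb x a i; lra.
have s7 : \big[Rplus/0]_(a : A) \big[Rplus/0]_x \big[Rmult/1]_(i < m) (1 + C w0 x i (a i) / 5)
    <= 2 ^ s * (11/5) ^ m.
  rewrite exchange_big /=.
  apply: Rle_trans (_ : \big[Rplus/0]_(x : 'I_(2 ^ s)) ((11/5) ^ m) <= _); last first.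
    by rewrite sumR_const card_ord INR_expn2; lra.
  apply: sumR_le => x _.
  rewrite -(bigA_distr_bigA (fun i b => 1 + C w0 x i b / 5)) /= -prodR_const.
  apply: prodR_mono => i _; rewrite big_bool /=.
  have := C1 w0 x i; have := C0 w0 x i true; have := C0 w0 x i false; lra.
rewrite -cardA; apply: Rle_trans s5 _.
apply: Rle_trans s7.
by apply: sumR_le => a _; apply: s6.
Qed.

Lemma LB_main : INR m / 90 <= INR s.
Proof.
have [w0 hw0] := claim2.
have kb := keybound w0 hw0.
have e1 : exp (mu / 6) = exp (1/9) ^ m.
  by rewrite -exp_INR_mul /mu; congr exp; field.
rewrite e1 -Rpow_mult_distr in kb.
have pos1 : 0 < 2 * exp (1/9) by have := exp_pos (1/9); lra.
have := ln_le' _ _ (pow_lt _ m pos1) kb.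
have q1 : 0 < 2 ^ s by apply: pow_lt; lra.
have q2 : 0 < (11/5) ^ m by apply: pow_lt; lra.
rewrite ln_mult // (ln_pow _ pos1) (ln_pow 2 ltac:(lra)) (ln_pow (11/5) ltac:(lra)).
rewrite ln_mult ?ln_exp; try lra; try exact: exp_pos.
have e2 : 11/5 = 2 * (1 + 1/10) by field.
rewrite e2 ln_mult; try lra.
have := ln_1p_le (1/10) ltac:(lra).
have := ln2_lt1; have := ln_lt_2.
have := pos_INR s; have := pos_INR m.
nra.
Qed.

End LB.

End MP3.
Import MP3.

Module MP4.

Local Open Scope R_scope.

Definition Dstream (m y : nat) (a : {ffun 'I_m -> bool}) : seq (update m) :=
  [seq ((j, Posz y) : update m) | j <- enum 'I_m & a j].

Section Stream.
Variables (m s : nat) (A : algorithm m s).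
Hypothesis vA : valid_alg A.

Definition isdist (d : 'I_(2 ^ s) -> R) :=
  (forall t, 0 <= d t) /\ \big[Rplus/0]_t d t = 1.

Lemma step_dist w k d u : isdist d ->
  isdist (fun t => \big[Rplus/0]_(z : 'I_(2 ^ s)) (d z * trans A w k z u t)).
Proof.
case: vA => _ [_ /(_ w) [_ [_ hT]]] [d0 d1]; split.
  move=> t; apply: sumR_ge0 => z _; apply: Rmult_le_pos => //; apply: (hT k z u).1.
rewrite exchange_big /= -[RHS]d1; apply: eq_bigr => z _.
by rewrite -big_distrr /= (hT k z u).2 Rmult_1_r.
Qed.

Lemma run_pass_dist w k d D : isdist d -> isdist (run_pass A w k d D).
Proof.
elim: D d => [|u D IH] d hd //=.
by apply: IH; apply: step_dist.
Qed.

Lemma init_dist w : isdist (init A w).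
Proof. by case: vA => _ [_ /(_ w) [h1 [h2 _]]]. Qed.

Lemma run1_cat w D u t :
  run A w 1 (D ++ [:: u]) t =
  \big[Rplus/0]_z (run_pass A w 0 (init A w) D z * trans A w 0 z u t).
Proof. by rewrite /run /= /run_pass foldl_cat. Qed.

End Stream.
Arguments run_pass_dist {m s A}.
Arguments init_dist {m s A}.
Arguments step_dist {m s A}.

Section StreamLB.
Variables (m s x y M : nat) (A : algorithm m s) (h : nat -> R) (eps T : R) (flip : bool).
Hypotheses (vA : valid_alg A) (sA : solves_SUM A 1 h eps M)
  (tA : forall a i, turnstile M (Dstream m y a ++ [:: ((i, Posz x) : update m)]))
  (sep : forall (a : {ffun 'I_m -> bool}) (i : 'I_m), (a i != flip -> T < (1 - eps) * gsum h (freq (Dstream m y a ++ [:: ((i, Posz x) : update m)])))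
     /\ (a i = flip -> (1 + eps) * gsum h (freq (Dstream m y a ++ [:: ((i, Posz x) : update m)])) <= T)).

Definition side (b : bool) (o : R) : R :=
  if Rlt_dec T o then (if b != flip then 1 else 0) else (if b != flip then 0 else 1).

Definition Cf w z (i : 'I_m) b :=
  \big[Rplus/0]_t (trans A w 0 z ((i, Posz x) : update m) t * side b (output A w t)).

Lemma side_01 b o : 0 <= side b o <= 1.
Proof. rewrite /side; destruct (Rlt_dec T o); case: ifP => _; lra. Qed.

Lemma side_sum o : side true o + side false o = 1.
Proof. rewrite /side; destruct (Rlt_dec T o); case: flip => /=; lra. Qed.

Lemma stream_LB : INR m / 90 <= INR s.
Proof.
have vA' := vA; case: vA' => p0 [p1 hw].
apply: (LB_main m s (seed A) (seed_w A) (fun w a => run_pass A w 0 (init A w) (Dstream m y a))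
  Cf) => //.
- by move=> w a t; have [h0 _] := run_pass_dist vA w 0 (init A w) (Dstream m y a) (init_dist vA w); apply: h0.
- by move=> w a; have [_ h1] := run_pass_dist vA w 0 (init A w) (Dstream m y a) (init_dist vA w).
- move=> w z i b; apply: sumR_ge0 => t _; apply: Rmult_le_pos.
    by have [_ [_ hT]] := hw w; apply: (hT 0%nat z _).1.
  by have := side_01 b (output A w t); lra.
- move=> w z i; rewrite /Cf -sumR_plus.
  have [_ [_ hT]] := hw w; rewrite -(hT 0%nat z ((i, Posz x) : update m)).2.
  apply: Req_le; apply: eq_bigr => t _; rewrite -Rmult_plus_distr_l side_sum; lra.
move=> a i.
set D := Dstream m y a ++ [:: ((i, Posz x) : update m)].
have := sA _ (tA a i); rewrite /prob_out_in => H; apply: Rle_trans H _.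
apply: sumR_le => w _; apply: Rmult_le_compat_l => //.
have e : forall t, run A w 1 D t = \big[Rplus/0]_z (run_pass A w 0 (init A w) (Dstream m y a) z
                       * trans A w 0 z ((i, Posz x) : update m) t) by move=> t; apply: run1_cat.
apply: Rle_trans (_ : \big[Rplus/0]_t (run A w 1 D t * side (a i) (output A w t)) <= _).
  apply: sumR_le => t _; apply: Rmult_le_compat_l.
    by have [h0 _] := run_pass_dist vA w 0 (init A w) D (init_dist vA w); apply: h0.
  have [s1 s2] := sep a i; rewrite -/D in s1 s2.
  have := side_01 (a i) (output A w t).
  case: Rle_dec => hl /=; last lra.
  case: Rle_dec => hh /=; last lra.
  rewrite -/D in hl hh.
  rewrite /side; case: Rlt_dec => ht /=; case: (boolP (a i != flip)) => hf /=; try lra.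
    have := s2 (eqP (negbNE hf)); lra.
  have := s1 hf; lra.
apply: Req_le.
under eq_bigr => t _ do rewrite e big_distrl /=.
rewrite exchange_big /=; apply: eq_bigr => z _.
rewrite /Cf big_distrr /=; apply: eq_bigr => t _; ring.
Qed.

End StreamLB.

End MP4.
Import MP4.

Module MP5.
Import Order.TTheory GRing.Theory Num.Theory.

Lemma freq_Dstream (m y : nat) (a : {ffun 'I_m -> bool}) (j : 'I_m) :
  (\sum_(u <- Dstream m y a | u.1 == j) u.2 = if a j then Posz y else 0)%R.
Proof.
rewrite /Dstream big_map /= big_filter_cond big_enum_cond /=.
case: (boolP (a j)) => aj.
  rewrite (big_pred1 j) // => k /=.
  by case: eqVneq => [->|]; rewrite ?aj ?andbF.
rewrite big_pred0 // => k /=.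
by case: eqVneq => [->|]; rewrite ?(negbTE aj) ?andbF.
Qed.

Definition Dfull (m x y : nat) (a : {ffun 'I_m -> bool}) (i : 'I_m) : seq (update m) :=
  Dstream m y a ++ [:: ((i, Posz x) : update m)].
Arguments Dfull {m}.

Lemma freq_Dfull (m x y : nat) (a : {ffun 'I_m -> bool}) (i j : 'I_m) :
  freq (Dfull x y a i) j = Posz ((if a j then y else 0) + (if i == j then x else 0))%N.
Proof.
rewrite /freq /Dfull big_cat /= freq_Dstream big_cons big_nil /=.
case: (a j); case: (i == j) => /=; lia.
Qed.

Lemma Dfull_nonneg (m x y : nat) (a : {ffun 'I_m -> bool}) (i : 'I_m) u :
  u \in Dfull x y a i -> (0 <= u.2)%R.
Proof.
rewrite mem_cat => /orP [/mapP [j _ ->]|] //=.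
by rewrite inE => /eqP ->.
Qed.

Lemma freq_prefix_le (n : nat) (D : seq (update n)) k j :
  (forall u, u \in D -> (0 <= u.2)%R) ->
  (0 <= freq (take k D) j <= freq D j)%R.
Proof.
move=> H.
have sum0 : forall r : seq (update n), (forall u, u \in r -> (0 <= u.2)%R) ->
    (0 <= \sum_(u <- r | u.1 == j) u.2)%R.
  move=> r Hr; rewrite big_seq_cond; apply: sumr_ge0 => u /andP [uin _]; exact: Hr.
apply/andP; split.
  by apply: sum0 => u /mem_take; apply: H.
have -> : freq D j = (freq (take k D) j + \sum_(u <- drop k D | u.1 == j) u.2)%R.
  by rewrite /freq -big_cat cat_take_drop.
rewrite lerDl; apply: sum0 => u /mem_drop; apply: H.
Qed.

Lemma turnstile_Dfull (m x y : nat) (a : {ffun 'I_m -> bool}) (i : 'I_m) :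
  turnstile (x + y) (Dfull x y a i).
Proof.
move=> k _ j.
have /andP [h1 h2] := @freq_prefix_le m (Dfull x y a i) k j (@Dfull_nonneg m x y a i).
move: h1 h2; rewrite freq_Dfull.
case: (freq (take k (Dfull x y a i)) j) => // n.
case: (a j); case: (i == j) => /=; lia.
Qed.

Local Open Scope R_scope.

Lemma gsum_Dfull (h : nat -> R) (h0 : h 0%N = 0) (hpos : forall n, 0 <= h n)
   (m x y : nat) (a : {ffun 'I_m -> bool}) (i : 'I_m) :
  h (x + (if a i then y else 0))%N <= gsum h (freq (Dfull x y a i)) /\
  gsum h (freq (Dfull x y a i)) <= h (x + (if a i then y else 0))%N + INR m * h y.
Proof.
rewrite /gsum (bigD1 i) //= freq_Dfull eqxx /=.
have e : ((if a i then y else 0) + x = x + (if a i then y else 0))%N by rewrite addnC.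
rewrite e.
have hr : forall j : 'I_m, j != i -> 0 <= h (absz (freq (Dfull x y a i) j)) <= h y.
  move=> j hj; rewrite freq_Dfull /= eq_sym (negbTE hj) addn0.
  by case: (a j) => /=; split; rewrite ?h0; try lra; apply: hpos.
split.
  rewrite -[X in X <= _]Rplus_0_r; apply: Rplus_le_compat_l.
  by apply: sumR_ge0 => j hj; case: (hr j hj).
apply: Rplus_le_compat_l.
apply: Rle_trans (_ : \big[Rplus/0]_(j < m | j != i) h y <= _).
  by apply: sumR_le => j hj; case: (hr j hj).
have -> : INR m * h y = \big[Rplus/0]_(j : 'I_m) h y by rewrite sumR_const card_ord.
rewrite big_mkcond /=.
apply: sumR_le => j _; case: (j != i) => //; first lra; exact: hpos.
Qed.

End MP5.
Import MP5.

Module MP6.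

Local Open Scope R_scope.

Lemma Rpower_pos x y : 0 < Rpower x y.
Proof. exact: exp_pos. Qed.

Lemma Rpower_ge (a L x : R) : 0 < a -> 0 < L -> Rpower L (/ a) <= x -> L <= Rpower x a.
Proof.
move=> ha hL hx.
have := Rle_Rpower_l _ _ a (Rlt_le _ _ ha) (conj (Rpower_pos L (/a)) hx).
rewrite Rpower_mult Rinv_l ?Rpower_1 //; lra.
Qed.

Lemma subpolyR_const (c : R) : 0 < c -> subpolyR (fun _ => c).
Proof.
move=> hc; split; first by move=> *; lra.
move=> al hal; split.
  move=> B; exists (Rpower (Rabs B / c + 1) (/ al)) => x hx x0.
  have hB := Rabs_pos B.
  have hc' : 0 < / c by apply: Rinv_0_lt_compat.
  have h1 : 0 < Rabs B / c + 1.
    have : 0 <= Rabs B / c by apply: Rmult_le_pos; lra.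
    lra.
  have := Rpower_ge _ _ _ hal h1 hx.
  have e : (Rabs B / c + 1) * c = Rabs B + c by field; lra.
  have := Rle_abs B; nra.
move=> e he; exists (Rpower (c / e + 1) (/ al)) => x hx x0.
have h1 : 0 < c / e + 1.
  have : 0 < c / e by apply: Rdiv_lt_0_compat.
  lra.
have := Rpower_ge _ _ _ hal h1 hx.
rewrite Rpower_Ropp => hp.
have pp := Rpower_pos x al.
rewrite Rabs_right; last first.
  apply: Rle_ge; apply: Rmult_le_pos; [apply: Rlt_le; apply: Rinv_0_lt_compat | lra]; lra.
have e1 : c / e < Rpower x al by lra.
apply: (Rmult_lt_reg_l (Rpower x al)) => //.
rewrite -Rmult_assoc Rinv_r; last lra.
have := Rmult_lt_compat_l e _ _ he e1.
have : e * (c / e) = c by field; lra.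
lra.
Qed.

End MP6.
Import MP6.

Module MP7.

Local Open Scope R_scope.

Lemma floor_nat (r : R) : 0 <= r -> exists m : nat, INR m <= r < INR m + 1.
Proof.
move=> hr; have [h1 h2] := archimed r.
have hz : Z.le 0 (Z.sub (up r) 1).
  have : Z.lt 0 (up r) by apply: lt_IZR; lra.
  lia.
exists (Z.to_nat (Z.sub (up r) 1)).
rewrite INR_IZR_INZ Z2Nat.id // minus_IZR; lra.
Qed.

Lemma asymp (al ka : R) : 0 < al -> 0 < ka ->
  exists Y0, 0 < Y0 /\ forall Y, Y0 <= Y ->
    1 <= ka * Rpower Y al /\
    90 * Rpower (2 * (ka * Rpower Y al) * Y) (al / (2 * (1 + al))) <= ka * Rpower Y al - 1.
Proof.
move=> hal hka.
set be := al / (2 * (1 + al)).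
set K := Rpower (2 * ka) be.
have hK : 0 < K by apply: Rpower_pos.
set U := Rmax 1 ((90 * K + 1) / ka).
have hU1 : 1 <= U by apply: Rmax_l.
have hU2 : (90 * K + 1) / ka <= U by apply: Rmax_r.
exists (Rpower U (/ (al / 2))); split; first exact: Rpower_pos.
move=> Y hY.
have hY0 : 0 < Y by have := Rpower_pos U (/ (al/2)); lra.
have hu : U <= Rpower Y (al / 2) by apply: Rpower_ge => //; lra.
set u := Rpower Y (al / 2) in hu.
have e1 : Rpower Y al = u * u by rewrite /u -Rpower_plus; congr Rpower; field.
have e2 : Rpower (2 * (ka * Rpower Y al) * Y) be = K * u.
  have -> : 2 * (ka * Rpower Y al) * Y = (2 * ka) * (Rpower Y al * Rpower Y 1).
    rewrite Rpower_1 //; ring.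
  rewrite -Rpower_plus -Rpower_mult_distr; first last.
  - exact: Rpower_pos.
  - lra.
  rewrite Rpower_mult /u /K; congr (_ * Rpower _ _).
  rewrite /be; field; lra.
rewrite e2 e1.
have hku : 90 * K + 1 <= ka * u.
  have : (90 * K + 1) / ka * ka = 90 * K + 1 by field; lra.
  nra.
split; nra.
Qed.

End MP7.
Import MP7.

Module MP8.

Local Open Scope R_scope.

Lemma scalarA th : 0 < th ->
  let ep := th / (4 * (1 + th)) in (1 + ep) * (1 + ep) < (1 - ep) * (1 + th).
Proof.
move=> ht ep.
have e : ep * (4 * (1 + th)) = th by rewrite /ep; field; lra.
have h0 : 0 < ep by rewrite /ep; apply: Rdiv_lt_0_compat; lra.
have h1 : ep < 1/4 by nra.
have h2 : ep <= th / 4 by nra.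
nra.
Qed.

Lemma scalarB th : 0 < th ->
  let ep := th / (4 * (1 + th)) in (1 + ep) * (1 + ep * (1 + th)) < (1 - ep) * (1 + th).
Proof.
move=> ht ep.
have e : ep * (4 * (1 + th)) = th by rewrite /ep; field; lra.
have h0 : 0 < ep by rewrite /ep; apply: Rdiv_lt_0_compat; lra.
have h1 : ep < 1/4 by nra.
have h2 : ep <= th / 4 by nra.
nra.
Qed.

Lemma not_tractable (h : nat -> R) (al th : R) : inG h -> 0 < al -> 0 < th ->
  (forall N : R, exists x y : nat, (x < y)%N /\ N <= INR y /\ h y * Rpower (INR y) al <= h x /\
      ((1 + th) * h x <= h (x + y)%N \/ (1 + th) * h (x + y)%N <= h x)) ->
  ~ tractable 1 h.
Proof.
move=> [h0 [h1 hp]] hal hth Hfam Htr.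
have hpos : forall n, 0 <= h n.
  by case=> [|n]; [rewrite h0; lra | apply: Rlt_le; apply: hp].
set ep := th / (4 * (1 + th)).
have eep : ep * (4 * (1 + th)) = th by rewrite /ep; field; lra.
have hep : 0 < ep by rewrite /ep; apply: Rdiv_lt_0_compat; lra.
have hep1 : ep < 1/4 by nra.
have := Htr (fun _ => / ep) (subpolyR_const _ (Rinv_0_lt_compat _ hep)) (fun _ _ => ep).
case => [n M _ _ | hstar [Hhs Hsol]].
  by rewrite Rinv_inv; lra.
set be := al / (2 * (1 + al)).
have hbe : 0 < be by rewrite /be; apply: Rdiv_lt_0_compat; lra.
have [X HX] := (Hhs.2 be hbe).2 1 Rlt_0_1.
have [Y0 [hY0 Hasym]] := asymp al ep hal hep.
have [x [y [hxy [hNy [hdrop hrat]]]]] := Hfam (Rmax (Rmax X Y0) 1).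
set Y := INR y in hNy hdrop.
have hYX : X <= Y by have := Rmax_l (Rmax X Y0) 1; have := Rmax_l X Y0; lra.
have hYY0 : Y0 <= Y by have := Rmax_l (Rmax X Y0) 1; have := Rmax_r X Y0; lra.
have hY1 : 1 <= Y by have := Rmax_r (Rmax X Y0) 1; lra.
have [ha1 ha2] := Hasym Y hYY0.
set r := ep * Rpower Y al in ha1 ha2.
have [m [hm1 hm2]] := floor_nat r ltac:(lra).
have hm0 : (0 < m)%N.
  case: m hm1 hm2 => // ; rewrite /= => *; lra.
have hy0 : (0 < y)%N by apply: leq_ltn_trans hxy.
have hyp : 0 < h y by apply: hp.
have hRp := Rpower_pos Y al.
have hx0 : 0 < h x by nra.
have hback : INR m * h y <= ep * h x.
  apply: Rle_trans (_ : r * h y <= _); first by apply: Rmult_le_compat_r; lra.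
  rewrite /r; nra.
have hxy1 : (1 <= x + y)%N by rewrite addn_gt0 hy0 orbT.
have [s [hs [A [vA sA]]]] := Hsol m (x + y)%N hm0 hxy1.
have gb := fun (a : {ffun 'I_m -> bool}) (i : 'I_m) => @gsum_Dfull h h0 hpos m x y a i.
have lb : INR m / 90 <= INR s.
  case: hrat => hrat.
  - apply: (stream_LB m s x y (x+y)%N A h ep
          ((1 + ep) * (1 + ep) * h x) false vA sA).
      by move=> a i; apply: turnstile_Dfull.
    move=> a i; have [g1 g2] := gb a i; rewrite /Dfull in g1 g2.
    have kA : (1 + ep) * (1 + ep) < (1 - ep) * (1 + th) := scalarA th hth.
    case: (a i) g1 g2 => /= g1 g2; split => // _; rewrite ?addn0 in g1 g2.
      set G := gsum h _ in g1 g2 *.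
      have q1 := Rmult_lt_compat_r (h x) _ _ hx0 kA.
      have q2 : (1 - ep) * ((1 + th) * h x) <= (1 - ep) * G.
        apply: Rmult_le_compat_l; lra.
      lra.
    set G := gsum h _ in g1 g2 *.
    have q2 : (1 + ep) * G <= (1 + ep) * (h x + ep * h x).
      apply: Rmult_le_compat_l; lra.
    lra.
  - apply: (stream_LB m s x y (x+y)%N A h ep
          ((1 + ep) * (h (x + y)%N + ep * h x)) true vA sA).
      by move=> a i; apply: turnstile_Dfull.
    move=> a i; have [g1 g2] := gb a i; rewrite /Dfull in g1 g2.
    have kB : (1 + ep) * (1 + ep * (1 + th)) < (1 - ep) * (1 + th) := scalarB th hth.
    have hxyp := hpos (x + y)%N.
    case: (a i) g1 g2 => /= g1 g2; split => // _; rewrite ?addn0 in g1 g2.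
      set G := gsum h _ in g1 g2 *.
      have q2 : (1 + ep) * G <= (1 + ep) * (h (x + y)%N + ep * h x).
        apply: Rmult_le_compat_l; lra.
      lra.
    set G := gsum h _ in g1 g2 *.
    have q1 := Rmult_lt_compat_r (h x) _ _ hx0 kB.
    have q2 : (1 - ep) * h x <= (1 - ep) * G.
      apply: Rmult_le_compat_l; lra.
    have q3 : (1 + ep) * ((1 + th) * h (x + y)%N) <= (1 + ep) * h x.
      apply: Rmult_le_compat_l; lra.
    nra.
set t := INR (m * (x + y)) in hs.
have hm1' : 1 <= INR m by rewrite -INR_1; apply: le_INR; apply/leP.
have hxy' : INR x < INR y by apply: lt_INR; apply/ltP.
have hx0' := pos_INR x.
have htY : Y <= t by rewrite /t mult_INR plus_INR; rewrite -/Y in hxy' *; nra.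
have ht2 : t <= 2 * r * Y by rewrite /t mult_INR plus_INR; rewrite -/Y in hxy' *; nra.
have ht0 : 0 < t by lra.
have := HX t ltac:(lra) ht0.
rewrite Rpower_Ropp => habs.
have hP := Rpower_pos t be.
have hlt : hstar t < Rpower t be.
  have h2 := Rle_abs (/ Rpower t be * hstar t).
  have h3 : / Rpower t be * hstar t < 1 by lra.
  have := Rmult_lt_compat_l (Rpower t be) _ _ hP h3.
  rewrite -Rmult_assoc Rinv_r; lra.
have hmono : Rpower t be <= Rpower (2 * r * Y) be.
  apply: Rle_Rpower_l; lra.
rewrite -/be in ha2; lra.
Qed.

End MP8.
Import MP8.

Module MP9.

Local Open Scope R_scope.

Section Construct.
Variables (g : nat -> R) (al delta : R).
Hypotheses (gG : inG g) (hal : 0 < al) (hdel : 0 < delta)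
  (P1 : forall N, 0 < N -> exists x y : nat, (x < y)%N /\ N <= INR y /\
        g y <= g x / Rpower (INR y) al).

Definition Ppair (N : nat) (p : nat * nat) : Prop :=
  (p.1 < p.2)%N /\ INR N + 1 <= INR p.2 /\ g p.2 <= g p.1 / Rpower (INR p.2) al.

Lemma ex_pair N : exists p, Ppair N p.
Proof.
have [x [y [h1 [h2 h3]]]] := P1 (INR N + 1) ltac:(have := pos_INR N; lra).
by exists (x, y).
Qed.

Definition pick (N : nat) : nat * nat :=
  proj1_sig (constructive_indefinite_description _ (ex_pair N)).

Lemma pickP N : Ppair N (pick N).
Proof. exact: (proj2_sig (constructive_indefinite_description _ (ex_pair N))). Qed.

Fixpoint pr (k : nat) : nat * nat :=
  match k with
  | O => pick 0
  | S k' => pick ((pr k').1 + (pr k').2)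
  end.

Definition xx k := (pr k).1.
Definition yy k := (pr k).2.
Definition zz k := (xx k + yy k)%N.

Lemma prP k : exists N, Ppair N (pr k).
Proof. by case: k => [|k] /=; eexists; apply: pickP. Qed.

Lemma xy_lt k : (xx k < yy k)%N.
Proof. by have [N [h _]] := prP k. Qed.

Lemma drop_g k : g (yy k) * Rpower (INR (yy k)) al <= g (xx k).
Proof.
have [N [_ [_ h]]] := prP k.
have hp := Rpower_pos (INR (yy k)) al.
rewrite /xx /yy in hp *.
have e : g (pr k).1 = g (pr k).1 / Rpower (INR (pr k).2) al * Rpower (INR (pr k).2) al.
  by field; lra.
rewrite [X in _ <= X]e; apply: Rmult_le_compat_r; lra.
Qed.

Lemma x_pos k : (0 < xx k)%N.
Proof.
case: gG => g0 [g1 gp].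
case E: (xx k) => [|n] //.
have := drop_g k; rewrite E g0.
have := Rpower_pos (INR (yy k)) al.
have : (0 < yy k)%N by have := xy_lt k; rewrite E.
move=> /gp h1 h2; nra.
Qed.

Lemma z_lt_ynext k : (zz k < yy k.+1)%N.
Proof.
have [_ [h _]] := pickP (zz k).
rewrite /zz /xx /yy in h *; rewrite /=.
have : INR ((pr k).1 + (pr k).2) < INR (pick ((pr k).1 + (pr k).2)).2 by lra.
by move/INR_lt/ltP.
Qed.

Lemma y_lt_z k : (yy k < zz k)%N.
Proof. by rewrite /zz -{1}(add0n (yy k)) ltn_add2r x_pos. Qed.

Lemma x_lt_z k : (xx k < zz k)%N.
Proof. by apply: ltn_trans (xy_lt k) (y_lt_z k). Qed.

Lemma zz_incr {j k} : (j < k)%N -> (zz j < zz k)%N.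
Proof.
elim: k => [|k IH] //; rewrite ltnS leq_eqVlt => /orP [/eqP ->|/IH h].
  exact: ltn_trans (z_lt_ynext k) (y_lt_z k.+1).
apply: ltn_trans h _; exact: ltn_trans (z_lt_ynext k) (y_lt_z k.+1).
Qed.

Lemma zz_inj j k : zz j = zz k -> j = k.
Proof.
move=> e; case: (ltngtP j k) => // h.
  by have := zz_incr h; rewrite e ltnn.
by have := zz_incr h; rewrite e ltnn.
Qed.

Lemma zz_ge k : (k <= zz k)%N.
Proof.
elim: k => [|k IH] //.
by apply: leq_ltn_trans IH (zz_incr (ltnSn k)).
Qed.

Lemma yy_ge k : (k <= yy k)%N.
Proof.
case: k => [|k] //.
have := zz_ge k; have := z_lt_ynext k; lia.
Qed.

Lemma zz_mono j k : (j <= k)%N -> (zz j <= zz k)%N.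
Proof.
rewrite leq_eqVlt => /orP [/eqP ->|/zz_incr /ltnW] //.
Qed.

Lemma yy_not_z k j : yy k != zz j.
Proof.
case: (ltnP j k) => h.
  have h1 : (zz j < yy k)%N.
    case: k h => [|k] //; rewrite ltnS => h.
    exact: leq_ltn_trans (zz_mono _ _ h) (z_lt_ynext k).
  by rewrite neq_ltn h1 orbT.
have h1 := zz_mono _ _ h.
by rewrite neq_ltn (leq_trans (y_lt_z k) h1).
Qed.

Lemma zz_ge2 k : (2 <= zz k)%N.
Proof. have := x_pos k; have := xy_lt k; rewrite /zz; lia. Qed.

Lemma x_hit k j : xx k = zz j -> (j < k)%N.
Proof.
move=> e; case: (ltnP j k) => // h.
have := zz_mono _ _ h.
by rewrite -e leqNgt x_lt_z.
Qed.

Definition fac (f : nat -> R) (n z : nat) : R :=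
  if (find (fun j => zz j == z) (iota 0 n) < n)%N
  then f (find (fun j => zz j == z) (iota 0 n)) else 1.

Lemma fac_hit f n j : (j < n)%N -> fac f n (zz j) = f j.
Proof.
move=> hj.
have hh : has (fun j' => zz j' == zz j) (iota 0 n).
  by apply/hasP; exists j => //; rewrite mem_iota.
have := nth_find 0%N hh; rewrite has_find size_iota in hh.
rewrite nth_iota // add0n => /eqP /zz_inj e.
by rewrite /fac hh e.
Qed.

Lemma fac_miss f n z : (forall j, (j < n)%N -> zz j != z) -> fac f n z = 1.
Proof.
move=> H.
have hh : ~~ has (fun j' => zz j' == z) (iota 0 n).
  apply/hasPn => j; rewrite mem_iota add0n => /andP [_ hj]; exact: H.
by rewrite has_find size_iota in hh; rewrite /fac (negbTE hh).
Qed.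

Lemma fac_ext f f' n z : (forall j, (j < n)%N -> f j = f' j) -> fac f n z = fac f' n z.
Proof. by move=> H; rewrite /fac; case: ifP => // h; apply: H. Qed.

Definition eta := delta / 4.

Definition chooseC (hx gz : R) : R :=
  if Rlt_dec (exp (- eta)) (gz / hx) then
    (if Rlt_dec (gz / hx) (exp eta) then exp delta else 1) else 1.

Fixpoint cf (k : nat) : nat -> R :=
  match k with
  | O => fun _ => 1
  | S k' => fun j => if j == k' then chooseC (g (xx k') * fac (cf k') k' (xx k')) (g (zz k'))
                     else cf k' j
  end.

Definition cc j := cf j.+1 j.

Lemma cf_stable k j : (j < k)%N -> cf k j = cc j.
Proof.
elim: k => [|k IH] //; rewrite ltnS leq_eqVlt => /orP [/eqP ->|h].
  by rewrite /cc.
rewrite /= ifN; first exact: IH.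
by rewrite neq_ltn h.
Qed.

Lemma cc_eq k : cc k = chooseC (g (xx k) * fac cc k (xx k)) (g (zz k)).
Proof.
rewrite /cc /= eqxx; congr (chooseC (_ * _) _).
by apply: fac_ext => j hj; apply: cf_stable.
Qed.

Definition hfac z := fac cc z.+1 z.
Definition hh z := g z * hfac z.

Lemma hfac_z j : hfac (zz j) = cc j.
Proof. by rewrite /hfac fac_hit // ltnS zz_ge. Qed.

Lemma hfac_x k : hfac (xx k) = fac cc k (xx k).
Proof.
case: (classic (exists j, xx k = zz j)) => [[j e]|ne].
  have hj := x_hit _ _ e.
  rewrite /hfac e !fac_hit //; rewrite ltnS; exact: zz_ge.
rewrite /hfac !fac_miss // => j _; apply/eqP => e; apply: ne; by exists j.
Qed.

Lemma hfac_y k : hfac (yy k) = 1.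
Proof. rewrite /hfac fac_miss // => j _; rewrite eq_sym; exact: yy_not_z. Qed.

Lemma cc_vals j : cc j = 1 \/ cc j = exp delta.
Proof.
rewrite cc_eq /chooseC.
destruct (Rlt_dec _ _); last by left.
destruct (Rlt_dec _ _); [by right | by left].
Qed.

Lemma fac_vals n z : fac cc n z = 1 \/ fac cc n z = exp delta.
Proof. rewrite /fac; case: ifP => _; [exact: cc_vals | by left]. Qed.

Lemma hfac_vals z : hfac z = 1 \/ hfac z = exp delta.
Proof. exact: fac_vals. Qed.

Lemma hfac_ge1 z : 1 <= hfac z.
Proof.
case: (hfac_vals z) => ->; first lra.
have := exp_ineq1_le delta; lra.
Qed.

Lemma hh_pos z : (0 < z)%N -> 0 < hh z.
Proof.
case: gG => _ [_ gp] hz; rewrite /hh; have := hfac_ge1 z; have := gp z hz; nra.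
Qed.

Lemma hh_inG : inG hh.
Proof.
case: gG => g0 [g1 gp]; split; first by rewrite /hh g0 Rmult_0_l.
split; last exact: hh_pos.
rewrite /hh g1 /hfac fac_miss; first lra.
move=> j _; have := zz_ge2 j; by case: (zz j) => [|[|n]].
Qed.

Lemma hh_theta : Theta_le g hh delta.
Proof.
case: gG => g0 [g1 gp] z hz; rewrite /hh.
have gz := gp z hz.
case: (hfac_vals z) => ->.
  rewrite Rmult_1_r Rminus_diag Rabs_R0; lra.
rewrite ln_mult //; last exact: exp_pos.
rewrite ln_exp Rabs_left1; lra.
Qed.

Lemma hh_drop k : hh (yy k) * Rpower (INR (yy k)) al <= hh (xx k).
Proof.
rewrite /hh hfac_y Rmult_1_r.
apply: Rle_trans (drop_g k) _.
case: gG => _ [_ gp]; have := gp _ (x_pos k); have := hfac_ge1 (xx k); nra.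
Qed.

Lemma hh_ratio k : exp eta * hh (xx k) <= hh (zz k) \/ exp eta * hh (zz k) <= hh (xx k).
Proof.
have hx := hh_pos _ (x_pos k).
have e1 : hh (xx k) = g (xx k) * fac cc k (xx k) by rewrite /hh hfac_x.
have hz : 0 < g (zz k) by case: gG => _ [_ gp]; apply: gp; have := zz_ge2 k; lia.
have ez : hh (zz k) = g (zz k) * chooseC (hh (xx k)) (g (zz k)).
  by rewrite {1}/hh hfac_z cc_eq -e1.
rewrite ez /chooseC.
set q := g (zz k) / hh (xx k).
have eq1 : g (zz k) = q * hh (xx k) by rewrite /q; field; lra.
have he := exp_pos eta.
have hde : eta = delta / 4 by [].
destruct (Rlt_dec _ _) as [h1|h1]; [destruct (Rlt_dec _ _) as [h2|h2]|]; rewrite /=.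
- left; rewrite eq1.
  have e2 : exp eta <= exp (- eta) * exp delta.
    rewrite -exp_plus; apply: exp_le'; lra.
  have e3 : exp (- eta) * exp delta < q * exp delta.
    apply: Rmult_lt_compat_r => //; exact: exp_pos.
  have e4 : exp eta <= q * exp delta by lra.
  have := Rmult_le_compat_r (hh (xx k)) _ _ (Rlt_le _ _ hx) e4; nra.
- left; rewrite Rmult_1_r eq1.
  have e4 : exp eta <= q by lra.
  have := Rmult_le_compat_r (hh (xx k)) _ _ (Rlt_le _ _ hx) e4; nra.
- right; rewrite Rmult_1_r eq1.
  have e2 : exp eta * exp (- eta) = 1 by rewrite -exp_plus Rplus_opp_r exp_0.
  have e4 : q <= exp (- eta) by lra.
  have e5 := Rmult_le_compat_l (exp eta) _ _ (Rlt_le _ _ he) e4.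
  have := Rmult_le_compat_r (hh (xx k)) _ _ (Rlt_le _ _ hx) e5; nra.
Qed.

Lemma hh_family : forall N : R, exists x y : nat, (x < y)%N /\ N <= INR y /\
   hh y * Rpower (INR y) al <= hh x /\
   ((1 + (exp eta - 1)) * hh x <= hh (x + y)%N \/ (1 + (exp eta - 1)) * hh (x + y)%N <= hh x).
Proof.
move=> N.
have [k [hk1 hk2]] := floor_nat (Rmax N 0) (Rmax_r N 0).
exists (xx k.+1), (yy k.+1); split; first exact: xy_lt.
split.
  have := le_INR _ _ (elimT leP (yy_ge k.+1)); rewrite S_INR.
  have := Rmax_l N 0; lra.
split; first exact: hh_drop.
have := hh_ratio k.+1; rewrite /zz.
have -> : 1 + (exp eta - 1) = exp eta by ring.
done.
Qed.

End Construct.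

End MP9.
Import MP9.

Module MP10.

Local Open Scope R_scope.

Lemma bbS_const (c : R) : 0 < c -> bbS (fun _ => c).
Proof.
move=> hc; split; last by move=> *; lra.
split; first by move=> *; lra.
move=> al hal; have [_ H] := subpolyR_const c hc.
have [Ha Hb] := H al hal.
have natX : forall X : R, exists X' : nat, forall x : nat, (X' <= x)%N -> X <= INR x.
  move=> X; have [k [_ hk]] := floor_nat (Rmax X 0) (Rmax_r X 0).
  exists k.+1 => x hx; have := le_INR _ _ (elimT leP hx); rewrite S_INR.
  have := Rmax_l X 0; lra.
split.
  move=> B; have [X HX] := Ha B; have [X' HX'] := natX X.
  exists X' => x hx hx0; apply: HX; first exact: HX'.
  by apply: lt_0_INR; apply/ltP.
move=> e he; have [X HX] := Hb e he; have [X' HX'] := natX X.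
exists X' => x hx hx0; apply: HX; first exact: HX'.
by apply: lt_0_INR; apply/ltP.
Qed.

Lemma normal_of (h : nat -> R) (al th : R) : inG h -> 0 < al -> 0 < th ->
  (forall N : R, exists x y : nat, (x < y)%N /\ N <= INR y /\ h y * Rpower (INR y) al <= h x /\
      ((1 + th) * h x <= h (x + y)%N \/ (1 + th) * h (x + y)%N <= h x)) ->
  normal bbS h.
Proof.
move=> [h0 [h1 hp]] hal hth Hfam [_ H2].
have [N1 [hN1 HN]] := H2 al hal (fun _ => th / 2) (bbS_const (th / 2) ltac:(lra)).
have [x [y [hxy [hNy [hdrop hrat]]]]] := Hfam N1.
have hy0 : (0 < y)%N by apply: leq_ltn_trans hxy.
have hyp := hp y hy0.
have hRp := Rpower_pos (INR y) al.
have hx0 : 0 < h x by nra.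
have hxy0 : 0 < h (x + y)%N by apply: hp; rewrite addn_gt0 hy0 orbT.
have per : is_period h al y.
  exists x; split => //.
  have e : h x / Rpower (INR y) al * Rpower (INR y) al = h x by field; lra.
  apply: (Rmult_le_reg_r (Rpower (INR y) al)) => //; lra.
have := HN y per hNy x hxy hdrop.
have m1 := Rmin_l (h x) (h (x + y)%N).
have m2 := Rmin_r (h x) (h (x + y)%N).
have m0 : 0 < Rmin (h x) (h (x + y)%N) by apply: Rmin_glb_lt.
have q1 := Rmult_le_compat_r (th / 2) _ _ ltac:(lra) m1.
have q2 := Rmult_le_compat_r (th / 2) _ _ ltac:(lra) m2.
have q3 : 0 < th * h x by apply: Rmult_lt_0_compat.
have q4 : 0 < th * h (x + y)%N by apply: Rmult_lt_0_compat.
case: hrat => hr.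
  rewrite Rabs_right; last lra.
  lra.
rewrite Rabs_left1; last lra.
lra.
Qed.

Lemma theorem64_aux (g : nat -> R) :
  inG g -> nearly_periodic bbS g ->
  forall delta : R, Rlt 0 delta ->
  exists h : nat -> R,
    inG h /\ normal bbS h /\ ~ tractable 1 h /\ Theta_le g h delta.
Proof.
move=> gG [[al [hal P1]] _] delta hdel.
exists (hh g al delta P1).
have hth : 0 < exp (eta delta) - 1.
  have := exp_ineq1 (eta delta); rewrite /eta; lra.
have hI := hh_inG g al delta gG hdel P1.
have hF := hh_family g al delta gG hdel P1.
split => //; split; first exact: (normal_of _ _ _ hI hal hth hF).
split; first exact: (not_tractable _ _ _ hI hal hth hF).
exact: hh_theta.
Qed.

End MP10.
Import MP10.


Theorem theorem64 (g : nat -> R) :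
  inG g -> nearly_periodic bbS g ->
  forall delta : R, Rlt 0 delta ->
  exists h : nat -> R,
    inG h /\ normal bbS h /\ ~ tractable 1 h /\ Theta_le g h delta.
Proof. exact: theorem64_aux. Qed.
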